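(* Let $0<p_1\le p_2\le1$ and let $X_1,X_2,Y_1,Y_2$ be independent random variables with $X_1$ geometric with success probability $p_1$, $X_2$ geometric with success probability $p_2$, and $Y_1,Y_2$ geometric with success probability $(p_1+p_2)/2$. Then for every positive integer $j$, $$\mathbb{P}(X_1+X_2>j)\ge\mathbb{P}(Y_1+Y_2>j).$$
   Context: A random variable $Y$ is geometric with success probability $p$ if $\mathbb{P}(Y=s)=(1-p)^{s-1}p$ for $s=1,2,\dots$. *)

(* Defs.v *)
From Stdlib Require Import Reals Lra Lia.
Open Scope R_scope.

Definition geom_pmf (p : R) (s : nat) : R :=
  match s with
  | O => 0
  | S k => (1 - p) ^ k * p
  end.

(* pmf of X1 + X2 for independent X1 ~ Geom(p1), X2 ~ Geom(p2):
   P(X1 + X2 = s) = sum_{a=0}^{s} P(X1 = a) P(X2 = s - a) *)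
Definition geom_sum_pmf (p1 p2 : R) (s : nat) : R :=
  sum_f_R0 (fun a => geom_pmf p1 a * geom_pmf p2 (s - a)) s.

Definition geom_sum_tail (p1 p2 : R) (j : nat) : R :=
  1 - sum_f_R0 (geom_sum_pmf p1 p2) j.

(* Main.v *)
Require Import Defs.
From Stdlib Require Import Reals Lra Lia.
Open Scope R_scope.

Fixpoint H (a b : R) (n : nat) : R :=
  match n with O => 1 | S m => b * H a b m + a ^ (S m) end.

Definition Hm1 (a b : R) (n : nat) : R :=
  match n with O => 0 | S m => H a b m end.

Lemma H_sum a b n : sum_f_R0 (fun k => a ^ k * b ^ (n - k)) n = H a b n.
Proof.
  induction n as [|n IH].
  - simpl. ring.
  - rewrite tech5. rewrite Nat.sub_diag.
    rewrite (sum_eq _ (fun k => (a ^ k * b ^ (n - k)) * b)).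
    + rewrite <- scal_sum, IH. simpl. ring.
    + intros i Hi. replace (S n - i)%nat with (S (n - i)) by lia. simpl. ring.
Qed.

Lemma H_rec2 a b n : H a b (S n) = a * H a b n + b ^ (S n).
Proof.
  induction n as [|n IH].
  - simpl. ring.
  - change (H a b (S (S n))) with (b * H a b (S n) + a ^ (S (S n))).
    rewrite IH at 1. simpl. ring.
Qed.

Lemma H_rec3 a b n : H a b (S n) = (a + b) * H a b n - a * b * Hm1 a b n.
Proof.
  destruct n as [|m].
  - simpl. ring.
  - simpl Hm1.
    change (H a b (S (S m))) with (b * H a b (S m) + a ^ (S (S m))).
    simpl. ring.
Qed.

Lemma pmf0 p1 p2 : geom_sum_pmf p1 p2 0 = 0.
Proof. unfold geom_sum_pmf. simpl. ring. Qed.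

Lemma pmf1 p1 p2 : geom_sum_pmf p1 p2 1 = 0.
Proof. unfold geom_sum_pmf. simpl. ring. Qed.

Lemma pmfSS p1 p2 n :
  geom_sum_pmf p1 p2 (S (S n)) = p1 * p2 * H (1 - p1) (1 - p2) n.
Proof.
  unfold geom_sum_pmf. rewrite tech5. rewrite Nat.sub_diag.
  rewrite decomp_sum by lia. simpl pred.
  rewrite (sum_eq _ (fun k => ((1 - p1) ^ k * (1 - p2) ^ (n - k)) * (p1 * p2))).
  - rewrite <- scal_sum, H_sum. simpl geom_pmf. ring.
  - intros i Hi. replace (S (S n) - S i)%nat with (S (n - i)) by lia.
    simpl geom_pmf. ring.
Qed.

Lemma tail_formula p1 p2 n :
  geom_sum_tail p1 p2 (S n) =
  H (1 - p1) (1 - p2) n - (1 - p1) * (1 - p2) * Hm1 (1 - p1) (1 - p2) n.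
Proof.
  unfold geom_sum_tail. induction n as [|n IH].
  - simpl. rewrite pmf0, pmf1. simpl. ring.
  - rewrite tech5, pmfSS.
    replace (1 - (sum_f_R0 (geom_sum_pmf p1 p2) (S n) +
                  p1 * p2 * H (1 - p1) (1 - p2) n))
      with ((1 - sum_f_R0 (geom_sum_pmf p1 p2) (S n)) -
                  p1 * p2 * H (1 - p1) (1 - p2) n) by ring.
    rewrite IH. rewrite H_rec3. simpl Hm1. ring.
Qed.

Lemma H_nonneg a b n : 0 <= a -> 0 <= b -> 0 <= H a b n.
Proof.
  intros Ha Hb. induction n as [|n IH]; simpl.
  - lra.
  - assert (0 <= a ^ S n) by (apply pow_le; lra).
    assert (0 <= b * H a b n) by (apply Rmult_le_pos; lra).
    simpl in *. lra.
Qed.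

Lemma H_const q n : H q q (S n) - q * H q q n = q ^ (S n).
Proof. simpl. ring. Qed.

Lemma powmean a b n : 0 <= b -> b <= a ->
  ((a + b) / 2) ^ n <= (a ^ n + b ^ n) / 2.
Proof.
  intros Hb Hab. induction n as [|n IH].
  - simpl. lra.
  - assert (b ^ n <= a ^ n) by (apply pow_incr; lra).
    assert (0 <= (a - b) * (a ^ n - b ^ n)) by (apply Rmult_le_pos; lra).
    assert (0 <= (a + b) / 2) by lra.
    assert (((a + b) / 2) * ((a + b) / 2) ^ n <= ((a + b) / 2) * ((a ^ n + b ^ n) / 2))
      by (apply Rmult_le_compat_l; lra).
    simpl. nra.
Qed.

Lemma D_step a b n : 0 <= b -> b <= a ->
  let q := (a + b) / 2 in
  H a b (S n) - H q q (S n) >= q * (H a b n - H q q n).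
Proof.
  intros Hb Hab q.
  pose proof (H_rec2 a b n) as R2.
  change (H a b (S n)) with (b * H a b n + a ^ (S n)) in *.
  pose proof (powmean a b (S n) Hb Hab) as PM.
  pose proof (H_const q n) as HC.
  assert (E : q * H a b n = (a * H a b n + b * H a b n) / 2) by (unfold q; field).
  fold q in PM. lra.
Qed.

Lemma D_nonneg a b n : 0 <= b -> b <= a ->
  H a b n - H ((a + b) / 2) ((a + b) / 2) n >= 0.
Proof.
  intros Hb Hab. induction n as [|n IH].
  - simpl. lra.
  - pose proof (D_step a b n Hb Hab) as S. cbv zeta in S.
    assert (0 <= (a + b) / 2) by lra.
    assert (0 <= (a + b) / 2 * (H a b n - H ((a + b) / 2) ((a + b) / 2) n))
      by (apply Rmult_le_pos; lra).
    lra.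
Qed.

Theorem lemmaB3 (p1 p2 : R) (j : nat) :
  0 < p1 -> p1 <= p2 -> p2 <= 1 -> (0 < j)%nat ->
  geom_sum_tail p1 p2 j >= geom_sum_tail ((p1 + p2) / 2) ((p1 + p2) / 2) j.
Proof.
  intros H1 H12 H2 Hj.
  destruct j as [|n]; [lia|].
  rewrite !tail_formula.
  set (a := 1 - p1). set (b := 1 - p2).
  replace (1 - (p1 + p2) / 2) with ((a + b) / 2) by (unfold a, b; field).
  assert (Hb : 0 <= b) by (unfold b; lra).
  assert (Hab : b <= a) by (unfold a, b; lra).
  assert (Ha : 0 <= a) by lra.
  assert (Hq1 : (a + b) / 2 <= 1) by (unfold a, b; lra).
  destruct n as [|m].
  - simpl. lra.
  - simpl Hm1.
    pose proof (D_step a b m Hb Hab) as S. cbv zeta in S.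
    pose proof (D_nonneg a b m Hb Hab) as DN.
    pose proof (H_nonneg a b m Ha Hb) as HN.
    set (q := (a + b) / 2) in *.
    set (Dm := H a b m - H q q m) in *.
    assert (0 <= q) by (unfold q; lra).
    assert (q * q * Dm <= q * Dm).
    { assert (0 <= q * Dm) by (apply Rmult_le_pos; lra).
      replace (q * q * Dm) with (q * (q * Dm)) by ring.
      rewrite <- (Rmult_1_l (q * Dm)) at 2.
      apply Rmult_le_compat_r; lra. }
    assert (0 <= (q * q - a * b) * H a b m).
    { apply Rmult_le_pos; [|lra]. unfold q.
      replace ((a + b) / 2 * ((a + b) / 2) - a * b) with (((a - b) / 2) ^ 2) by field.
      apply pow2_ge_0. }
    unfold Dm in *. nra.
Qed.
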